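(* In the model described in the context, it is impossible to implement an a-audit operation satisfying both completeness and strong accuracy.
   Context: Model. An asynchronous system has an arbitrary number of client processes (writers, readers, auditors) and $n$ storage objects $o_1,\dots,o_n$. Each $o_k$ is a linearisable loggable read/write register holding a block and a log $L_k$ (initially empty). Its operations are: rw-write($b$), which stores $b$; rw-read(), which returns the current block (or $\perp$) and appends $\langle p_r,\mathit{label}(b)\rangle$ to $L_k$, where $p_r$ is the reader and $\mathit{label}(b)$ identifies the value from which $b$ was derived; and rw-getLog(), which returns $L_k$. A multi-writer multi-reader register over values $\mathbb{V}$ is emulated by information dispersal. An a-write($v$) encodes $v$ into blocks $b_{v_1},\dots,b_{v_n}$, with $b_{v_k}$ sent to $o_k$. Any $\tau$ distinct blocks of $v$ suffice to recover $v$, and fewer do not; $\tau>f$. Reads are fast (one round-trip). Concurrency between operations is unlimited, and writes may be left incomplete. Faults. Writers and auditors can only crash. Faulty readers may crash or contact a subset of the objects. At most $f$ objects are faulty; a faulty object may crash, omit its block from readers, omit log records from auditors, and report records of nonexistent reads. Providing set $P_{p_r,v}$: the set of objects $o_k$ that, in the history, received a write request for $b_{v_k}$ and responded $b_{v_k}$ to a read request of $p_r$. The value $v$ is effectively read by $p_r$ iff $|P_{p_r,v}|\ge\tau$. Audit. An a-audit obtains logs from an auditing quorum $A$ of $n-f$ objects. It returns a set $E_A$ of evidences, each evidence $\mathcal{E}_{p_r,v}$ being created from at least $t\ge1$ records $\langle p_r,\mathit{label}(v)\rangle$ from distinct objects. Completeness: $|P_{p_r,v}|\ge\tau$ before the audit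 implies $\mathcal{E}_{p_r,v}\in E_A$. Strong accuracy: for every correct reader $p_r$ and every value $v$, $|P_{p_r,v}|<\tau$ before the audit implies $\mathcal{E}_{p_r,v}\notin E_A$. *)

(* Defs.v *)
(* Abstract model of executions of the audited register
   emulation, as seen at the moment an a-audit is performed. *)
From mathcomp Require Import all_boot.
Set Implicit Arguments. Unset Strict Implicit. Unset Printing Implicit Defensive.

Section Model.
Variables (n : nat) (Reader Val : eqType).

(* A log record <p_r, label(b)>: label(b) identifies the value v from which the
   block b = b_{v_k} was derived, so we identify it with v. *)
Definition record := (Reader * Val)%type.

Record execution := Execution {
  faulty_obj : {set 'I_n};
  faulty_reader : pred Reader;
  wrote : Val -> 'I_n -> bool;      (* o_k received a write request for b_{v_k} *)
  served : Reader -> Val -> 'I_n -> bool;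
                                    (* o_k responded b_{v_k} to a read of p_r *)
  obj_log : 'I_n -> seq record;
  quorum : {set 'I_n};
  reported : 'I_n -> seq record
}.

(* Admissible executions under the fault model with at most f faulty objects:
   - an object can only serve a block of v it was asked to store (blocks cannot
     be forged; faulty objects may only omit);
   - a correct object logs exactly the reads it served (rw-read appends
     <p_r,label(b)> for the block b it returns);
   - a correct object reports its log faithfully to the auditor; a faulty
     object may omit records and report records of nonexistent reads
     (its reported log is arbitrary);
   - faulty readers are unconstrained (crash / contact only some objects);
   - the auditing quorum consists of n - f objects. *)
Definition admissible (f : nat) (e : execution) : Prop :=
  [/\ #|faulty_obj e| <= f,
      (forall p v k, served e p v k -> wrote e v k),
      (forall k, k \notin faulty_obj e ->
         forall p v, ((p, v) \in obj_log e k) = served e p v k),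
      (forall k, k \notin faulty_obj e -> reported e k = obj_log e k)
    & #|quorum e| = n - f].

Definition providing (e : execution) (p : Reader) (v : Val) : {set 'I_n} :=
  [set k | wrote e v k && served e p v k].

(* An a-audit algorithm: its output E_A (a set of evidences E_{p_r,v},
   identified with pairs (p_r, v)) is computed from the logs obtained from the
   auditing quorum A. *)
Definition audit_alg := {set 'I_n} -> ('I_n -> seq record) -> Reader -> Val -> Prop.

Definition evidence_from (t : nat) (aud : audit_alg) : Prop :=
  forall A L p v, aud A L p v -> t <= #|[set k in A | (p, v) \in L k]|.

Definition audit_output (aud : audit_alg) (e : execution) :=
  aud (quorum e) (fun k => if k \in quorum e then reported e k else [::]).

Definition completeness (tau : nat) (aud : audit_alg) (e : execution) : Prop :=
  forall p v, tau <= #|providing e p v| -> audit_output aud e p v.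

Definition strong_accuracy (tau : nat) (aud : audit_alg) (e : execution) : Prop :=
  forall p v, ~~ faulty_reader e p -> #|providing e p v| < tau ->
    ~ audit_output aud e p v.

End Model.

(* Main.v *)
Require Import Defs.
From mathcomp Require Import all_boot.

Lemma card_lt_ord (n m : nat) : m <= n -> #|[set k : 'I_n | k < m]| = m.
Proof.
move=> H.
have ->: [set k : 'I_n | k < m] = [set widen_ord H i | i : 'I_m].
  apply/setP=> k; rewrite inE; apply/idP/imsetP.
    by move=> km; exists (Ordinal km) => //; apply/val_inj.
  by case=> i _ ->; exact: (ltn_ord i).
rewrite card_imset ?card_ord // => i j ij; apply/val_inj; move: (congr1 val ij) => /=. exact.
Qed.

Theorem theorem2 (n f tau : nat) (Reader Val : eqType) (r0 : Reader) (v0 : Val) :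
  0 < f -> f < tau -> tau <= n - f ->
  ~ exists (t : nat) (aud : audit_alg n Reader Val),
      [/\ 1 <= t, evidence_from t aud &
          forall e : execution n Reader Val, admissible f e ->
            completeness tau aud e /\ strong_accuracy tau aud e].
Proof.
move=> f0 ftau taun [t [aud [_ _ H]]].
have taun' : tau <= n by apply: leq_trans taun (leq_subr _ _).
have fn : f <= n by apply: leq_trans (ltnW ftau) taun'.
pose S1 := [set k : 'I_n | k < tau].
pose F := [set k : 'I_n | k < f].
pose Q := [set k : 'I_n | k < n - f].
pose lg := fun k : 'I_n => if k < tau then [:: (r0, v0)] else [::].
pose mk (Fs Ss : {set 'I_n}) :=
  @Execution n Reader Val Fs pred0 (fun _ _ => true)
    (fun p v k => [&& p == r0, v == v0 & k \in Ss]) lg Q lg.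
have logE : forall (Ss : {set 'I_n}) k p v, (k \in Ss) = (k < tau) ->
    ((p, v) \in lg k) = [&& p == r0, v == v0 & k \in Ss].
  move=> Ss k p v ->; rewrite /lg; case: (k < tau).
    by rewrite mem_seq1 xpair_eqE andbT.
  by rewrite in_nil !andbF.
have cQ : #|Q| = n - f by rewrite card_lt_ord // leq_subr.
have ad1 : admissible f (mk set0 S1).
  split => //=; first by rewrite cards0.
  by move=> k _ p v; apply: logE; rewrite inE.
have ad2 : admissible f (mk F (S1 :\: F)).
  split => //=; first by rewrite card_lt_ord.
  move=> k kF p v; apply: logE; rewrite !inE.
  by move: kF; rewrite inE => ->.
have [C1 _] := H _ ad1.
have [_ A2] := H _ ad2.
have P1 : providing (mk set0 S1) r0 v0 = S1.
  by apply/setP=> k; rewrite /providing /= !inE /= !eqxx.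
have P2 : providing (mk F (S1 :\: F)) r0 v0 = S1 :\: F.
  by apply/setP=> k; rewrite /providing /= !inE /= !eqxx.
have O1 := C1 r0 v0.
rewrite P1 card_lt_ord // leqnn in O1.
apply: (A2 r0 v0) => //.
  rewrite P2 cardsD card_lt_ord //.
  have -> : S1 :&: F = F.
    apply/setIidPr/subsetP=> k; rewrite !inE => kf.
    exact: ltn_trans kf ftau.
  rewrite card_lt_ord // ltn_subrL f0 /=.
  exact: leq_ltn_trans (leq0n _) ftau.
exact: O1.
Qed.
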